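(* For every state $(S_i)_{i\in\mathbb Z}$ of the box-basket-ball system, the state obtained by the carrier description of $T_\infty$ coincides with the state obtained by the combinatorial description of the time evolution (both as defined in the context).
   Context: Box-basket-ball system (BBBS). A site state is a triple $(a,b,c)$ of nonnegative integers with $a=b-c+1$; it models a site containing one box, $b$ baskets and $c$ balls, where each box or basket holds at most one ball (balls are placed in the box first whenever possible), so $a$ is the number of unoccupied boxes/baskets and $\min(a,b)$ is the number of empty baskets. Write $V=(1,0,0)$ (vacuum). A state is a sequence $(S_i)_{i\in\mathbb Z}$ of site states with $S_i=V$ for all but finitely many $i$. Carrier description of $T_\infty$: a carrier, initially in state $(\infty,0,0)$, passes through the sites from left ($i\to-\infty$) to right; when the carrier in state $(\infty,b,c)$ meets the site $S_i=(d,e,f)$, the site becomes $S_i'=(d',e',f')$ and the carrier becomes $(\infty,b',c')$, where $d'=d+b+f-\min(e+c,d+c,d+b)$, $e'=e+b-\min(d,e)$, $f'=\min(e+c,d+c,d+b)-\min(d,e)$, $b'=\min(d,e)$, $c'=c+f+\min(d,e)-\min(e+c,d+c,d+b)$. The new state is $(S_i')_{i\in\mathbb Z}$. Combinatorial description: first, every empty basket is moved from its site $i$ to site $i+1$ (full baskets are not moved); second, the balls are considered one at a time from left to right, and each ball is moved to the nearest currently unoccupied box or basket located at a site strictly to its right; each ball is moved exactly once. *)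

(* Defs.v *)
From Stdlib Require Import ZArith List Sorting.Sorted Arith Lia.
Import ListNotations.
Open Scope Z_scope.

(** Site states (a,b,c) with a = b - c + 1, i.e. a + c = b + 1 in nat. *)
Definition site : Type := (nat * nat * nat)%type.
Definition V : site := (1%nat, 0%nat, 0%nat).
Definition site_a (s : site) : nat := let '(a, _, _) := s in a.
Definition site_b (s : site) : nat := let '(_, b, _) := s in b.
Definition site_c (s : site) : nat := let '(_, _, c) := s in c.
Definition valid_site (s : site) : Prop :=
  let '(a, b, c) := s in (a + c = b + 1)%nat.

Definition state : Type := Z -> site.

Definition is_state (S : state) : Prop :=
  (forall i, valid_site (S i)) /\
  exists N : Z, forall i, N < Z.abs i -> S i = V.

(** One carrier/site interaction: carrier (oo,b,c) meets site (d,e,f). *)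
Definition carrier_step (car : nat * nat) (s : site) : site * (nat * nat) :=
  let '(b, c) := car in
  let '(d, e, f) := s in
  let m := Nat.min (Nat.min (e + c) (d + c)) (d + b) in
  let n := Nat.min d e in
  (((d + b + f - m)%nat, (e + b - n)%nat, (m - n)%nat),
   (n, (c + f + n - m)%nat)).

(** Carrier description of T_oo: the carrier state car i entering site i is
    (oo,0,0) far to the left and is transformed site by site. *)
Definition carrier_evolution (S S' : state) : Prop :=
  exists car : Z -> nat * nat,
    (exists L : Z, forall i, i <= L -> car i = (0%nat, 0%nat)) /\
    (forall i, car (i + 1) = snd (carrier_step (car i) (S i))) /\
    (forall i, S' i = fst (carrier_step (car i) (S i))).

Definition empty_baskets (s : site) : nat := Nat.min (site_a s) (site_b s).

(* baskets at site i after step 1 (empty baskets moved from i to i+1) *)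
Definition baskets1 (S : state) (i : Z) : nat :=
  (site_b (S i) - empty_baskets (S i) + empty_baskets (S (i - 1)%Z))%nat.

(* number of boxes+baskets at site i after step 1 *)
Definition cap1 (S : state) (i : Z) : nat := (baskets1 S i + 1)%nat.

(* Step 2: balls (listed by their original site, left to right) are moved one
   at a time; occ x = number of occupied boxes/baskets at site x. *)
Inductive run (cap : Z -> nat) : (Z -> nat) -> list Z -> (Z -> nat) -> Prop :=
| run_nil : forall occ, run cap occ [] occ
| run_cons : forall occ j k l occ',
    j < k ->
    (occ k < cap k)%nat ->
    (forall m, j < m < k -> (cap m <= occ m)%nat) ->
    run cap (fun x => if Z.eq_dec x k then Datatypes.S (occ x)
                      else if Z.eq_dec x j then pred (occ x) else occ x)
        l occ' ->
    run cap occ (j :: l) occ'.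

Definition comb_evolution (S S' : state) : Prop :=
  exists (balls : list Z) (occ' : Z -> nat),
    Sorted Z.le balls /\
    (forall i, count_occ Z.eq_dec balls i = site_c (S i)) /\
    run (cap1 S) (fun i => site_c (S i)) balls occ' /\
    (forall i, S' i = ((cap1 S i - occ' i)%nat, baskets1 S i, occ' i)).

(* Main.v *)
Require Import Defs.
From Stdlib Require Import ZArith List Sorting.Sorted Arith Lia.
Import ListNotations.
Open Scope Z_scope.

Lemma zero_upto (cap occ r c : Z -> nat) B j :
  (forall x, x <= B -> c x = 0%nat) ->
  (forall x, c (x+1) = (c x - Nat.min (c x) (cap x - occ x) + r x)%nat) ->
  (forall x, x < j -> r x = 0%nat) ->
  forall x, x <= j -> c x = 0%nat.
Proof.
 intros H0 HR Hr x Hx.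
 destruct (Z.le_gt_cases x B) as [h|h]; [auto|].
 assert (H: forall n:nat, B + Z.of_nat n <= j -> c (B + Z.of_nat n) = 0%nat).
 { induction n; intros.
   - rewrite Z.add_0_r. apply H0; lia.
   - replace (B + Z.of_nat (S n)) with ((B + Z.of_nat n) + 1) by lia.
     rewrite HR, IHn by lia. rewrite Hr by lia. reflexivity. }
 replace x with (B + Z.of_nat (Z.to_nat (x - B))) by lia. apply H; lia.
Qed.

Lemma pos_upto (c : Z -> nat) (j k : Z) :
  (1 <= c (j+1)%Z)%nat ->
  (forall x, j < x < k -> (c x <= c (x+1)%Z)%nat) ->
  forall x, j < x <= k -> (1 <= c x)%nat.
Proof.
 intros H1 Hm x Hx.
 assert (H: forall n:nat, j + 1 + Z.of_nat n <= k -> (1 <= c (j + 1 + Z.of_nat n)%Z)%nat).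
 { induction n; intros.
   - rewrite Z.add_0_r. auto.
   - replace (j + 1 + Z.of_nat (S n)) with ((j + 1 + Z.of_nat n) + 1) by lia.
     specialize (Hm (j + 1 + Z.of_nat n)). specialize (IHn ltac:(lia)).
     assert (c (j + 1 + Z.of_nat n)%Z <= c (j + 1 + Z.of_nat n + 1)%Z)%nat by (apply Hm; lia).
     lia. }
 replace x with (j + 1 + Z.of_nat (Z.to_nat (x - j - 1))) by lia. apply H; lia.
Qed.

Lemma run_char cap occ l occ' : run cap occ l occ' ->
  forall B c, Sorted Z.le l -> (forall y, In y l -> B <= y) ->
  (forall x, (count_occ Z.eq_dec l x <= occ x)%nat) ->
  (forall x, x <= B -> c x = 0%nat) ->
  (forall x, c (x+1) = (c x - Nat.min (c x) (cap x - occ x) + count_occ Z.eq_dec l x)%nat) ->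
  forall x, occ' x = (occ x - count_occ Z.eq_dec l x + Nat.min (c x) (cap x - occ x))%nat.
Proof.
 induction 1 as [occ|occ j k l occ' Hjk Hk Hfull Hrun IH];
   intros B c Hs HB Hle H0 HR x.
 - simpl in *.
   assert (c x = 0%nat) as ->.
   { apply (zero_upto cap occ (fun _ => 0%nat) c B x); auto. lia. }
   simpl. lia.
 - apply Sorted_StronglySorted in Hs; [|exact Z.le_trans].
   inversion Hs as [|? ? Hs' Hall]; subst.
   rewrite Forall_forall in Hall.
   assert (Hge: forall y, In y l -> j <= y) by auto.
   assert (Hcnt: forall x, count_occ Z.eq_dec (j::l) x
                    = ((if Z.eq_dec j x then 1 else 0) + count_occ Z.eq_dec l x)%nat).
   { intro y. simpl. destruct (Z.eq_dec j y); reflexivity. }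
   assert (Hcj: forall x, x <= j -> c x = 0%nat).
   { apply (zero_upto cap occ (count_occ Z.eq_dec (j::l)) c B j); auto.
     intros y Hy. apply count_occ_not_In. intros [E|E]; [lia|]. apply Hge in E. lia. }
   assert (Hpos: forall x, j < x <= k -> (1 <= c x)%nat).
   { apply pos_upto.
     - rewrite HR, Hcj by lia. rewrite Hcnt. destruct (Z.eq_dec j j); [|congruence]. simpl. lia.
     - intros y Hy. rewrite HR. specialize (Hfull y Hy). lia. }
   set (c1 := fun x => if Z_lt_dec j x then if Z_le_dec x k then (c x - 1)%nat else c x else c x).
   rewrite (IH B c1 (StronglySorted_Sorted Hs')); clear IH.
   + cbv beta. unfold c1.
     rewrite Hcnt.
     destruct (Z.eq_dec x k) as [e|n1].
     * subst x. specialize (Hpos k ltac:(lia)).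
       destruct (Z.eq_dec j k); [lia|].
       destruct (Z_lt_dec j k); [|lia]. destruct (Z_le_dec k k); [|lia]. specialize (Hle k). rewrite Hcnt in Hle. destruct (Z.eq_dec j k); [lia|]. lia.
     * destruct (Z.eq_dec x j) as [e|n2].
       -- subst x. destruct (Z.eq_dec j j); [|congruence].
          rewrite Hcj by lia. destruct (Z_lt_dec j j); [lia|].
          specialize (Hle j). rewrite Hcnt in Hle. destruct (Z.eq_dec j j); [|congruence]. lia.
       -- destruct (Z.eq_dec j x); [lia|].
          destruct (Z_lt_dec j x); [|lia]. destruct (Z_le_dec x k); [|lia].
          assert (x < k) by lia. specialize (Hfull x ltac:(lia)). lia.
   + intros y Hy. apply HB. right. exact Hy.
   + intro y. cbv beta. specialize (Hle y). rewrite Hcnt in Hle.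
     destruct (Z.eq_dec y k) as [e1|n1].
     { lia. }
     destruct (Z.eq_dec y j) as [e2|n2].
     { rewrite e2 in *. destruct (Z.eq_dec j j); lia. }
     destruct (Z.eq_dec j y); lia.
   + intros y Hy. unfold c1. assert (B <= j) by (apply HB; left; auto).
     destruct (Z_lt_dec j y); [lia|]. auto.
   + intro y. cbv beta. unfold c1. rewrite HR. rewrite Hcnt.
     destruct (Z.eq_dec y k) as [e|n1].
     * subst y. specialize (Hpos k ltac:(lia)).
       destruct (Z.eq_dec j k); [lia|].
       destruct (Z_lt_dec j k); [|lia]. destruct (Z_le_dec k k); [|lia].
       destruct (Z_lt_dec j (k+1)); [|lia]. destruct (Z_le_dec (k+1) k); [lia|].
       assert (occ k < cap k)%nat by exact Hk. lia.
     * destruct (Z.eq_dec y j) as [e|n2].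
       -- subst y. destruct (Z.eq_dec j j); [|congruence].
          rewrite (Hcj j) by lia. destruct (Z_lt_dec j j); [lia|].
          destruct (Z_lt_dec j (j+1)); [|lia]. destruct (Z_le_dec (j+1) k); [|lia].
          simpl. lia.
       -- destruct (Z.eq_dec j y); [lia|].
          destruct (Z_lt_dec j y).
          ++ destruct (Z_le_dec y k); [|].
             ** assert (y < k) by lia. specialize (Hfull y ltac:(lia)).
                specialize (Hpos y ltac:(lia)).
                destruct (Z_lt_dec j (y+1)); [|lia]. destruct (Z_le_dec (y+1) k); [|lia]. lia.
             ** destruct (Z_lt_dec j (y+1)); [|lia]. destruct (Z_le_dec (y+1) k); [lia|]. lia.
          ++ assert (y < j) by lia.
             destruct (Z_lt_dec j (y+1)).
             ** assert (y + 1 = j) by lia. lia.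
             ** lia.
Qed.

Lemma zrec_unique (X : Type) (F : Z -> X -> X) (h1 h2 : Z -> X) L :
  (forall i, i <= L -> h1 i = h2 i) ->
  (forall i, h1 (i+1) = F i (h1 i)) -> (forall i, h2 (i+1) = F i (h2 i)) ->
  forall i, h1 i = h2 i.
Proof.
  intros H0 H1 H2 i.
  destruct (Z.le_gt_cases i L) as [h|h]; [auto|].
  assert (H: forall n:nat, h1 (L + Z.of_nat n) = h2 (L + Z.of_nat n)).
  { induction n.
    - rewrite Z.add_0_r. apply H0; lia.
    - replace (L + Z.of_nat (S n)) with ((L + Z.of_nat n) + 1) by lia.
      rewrite H1, H2, IHn. reflexivity. }
  replace i with (L + Z.of_nat (Z.to_nat (i - L))) by lia. apply H.
Qed.

Fixpoint carf (st : state) (L0 : Z) (n : nat) : nat * nat :=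
  match n with
  | O => (0%nat, 0%nat)
  | Datatypes.S n' => snd (carrier_step (carf st L0 n') (st (L0 + Z.of_nat n')))
  end.

Definition car0 (st : state) (L0 : Z) (i : Z) : nat * nat :=
  if Z_le_dec i L0 then (0%nat, 0%nat) else carf st L0 (Z.to_nat (i - L0)).

Lemma car0_rec st L0 : (forall i, i <= L0 -> st i = V) ->
  forall i, car0 st L0 (i+1) = snd (carrier_step (car0 st L0 i) (st i)).
Proof.
  intros HV i. unfold car0.
  destruct (Z_le_dec (i+1) L0).
  - destruct (Z_le_dec i L0); [|lia]. rewrite HV by lia. reflexivity.
  - destruct (Z_le_dec i L0).
    + assert (i = L0) by lia. subst.
      replace (Z.to_nat (L0 + 1 - L0)) with 1%nat by lia. simpl.
      rewrite Z.add_0_r. reflexivity.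
    + replace (Z.to_nat (i + 1 - L0)) with (Datatypes.S (Z.to_nat (i - L0))) by lia.
      simpl. replace (L0 + Z.of_nat (Z.to_nat (i - L0))) with i by lia. reflexivity.
Qed.

Lemma car0_low st L0 i : i <= L0 -> car0 st L0 i = (0%nat, 0%nat).
Proof. intros. unfold car0. destruct (Z_le_dec i L0); [auto|lia]. Qed.

Lemma carrier_iff st L0 : (forall i, i <= L0 -> st i = V) ->
  forall S', carrier_evolution st S' <-> forall i, S' i = fst (carrier_step (car0 st L0 i) (st i)).
Proof.
  intros HV S'. split.
  - intros (car & [L HL] & Hr & HS) i. rewrite HS.
    rewrite (zrec_unique _ (fun i c => snd (carrier_step c (st i))) car (car0 st L0) (Z.min L L0));
      auto.
    + intros j Hj. rewrite HL by lia. rewrite car0_low by lia. reflexivity.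
    + apply car0_rec; auto.
  - intros H. exists (car0 st L0). split; [|split].
    + exists L0. apply car0_low.
    + apply car0_rec; auto.
    + exact H.
Qed.

Lemma fst_car0 st L0 : (forall i, i <= L0 -> st i = V) ->
  forall x, fst (car0 st L0 x) = empty_baskets (st (x-1)).
Proof.
  intros HV x. replace x with ((x-1)+1) at 1 by lia. rewrite car0_rec by auto.
  destruct (car0 st L0 (x-1)) as [b c]. destruct (st (x-1)) as [[d e] f].
  reflexivity.
Qed.

Lemma comb_result st L0 (Hv : forall i, valid_site (st i)) :
  (forall i, i <= L0 -> st i = V) ->
  forall balls occ', Sorted Z.le balls ->
  (forall i, count_occ Z.eq_dec balls i = site_c (st i)) ->
  run (cap1 st) (fun i => site_c (st i)) balls occ' ->
  forall x, ((cap1 st x - occ' x)%nat, baskets1 st x, occ' x) = fst (carrier_step (car0 st L0 x) (st x)).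
Proof.
  intros HV balls occ' Hs Hc Hr x.
  rewrite (run_char _ _ _ _ Hr L0 (fun x => snd (car0 st L0 x)) Hs).
  - rewrite Hc. assert (Hb := fst_car0 st L0 HV x).
    unfold cap1, baskets1. rewrite <- Hb.
    specialize (Hv x).
    destruct (car0 st L0 x) as [b c]. destruct (st x) as [[d e] f].
    simpl in *. unfold empty_baskets, site_a, site_b, site_c in *. simpl in *.
    f_equal; [f_equal|]; lia.
  - intros y Hy. destruct (Z_le_gt_dec L0 y); [lia|].
    apply (count_occ_In Z.eq_dec) in Hy. rewrite Hc, HV in Hy by lia. simpl in Hy. lia.
  - intro y. rewrite Hc. lia.
  - intros y Hy. rewrite car0_low by auto. reflexivity.
  - intro y. rewrite car0_rec by auto. rewrite Hc. assert (Hb := fst_car0 st L0 HV y).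
    unfold cap1, baskets1. rewrite <- Hb.
    specialize (Hv y).
    destruct (car0 st L0 y) as [b c]. destruct (st y) as [[d e] f].
    simpl in *. unfold empty_baskets, site_a, site_b, site_c in *. simpl in *.
    lia.
Qed.

Lemma least_search (P : Z -> Prop) (dec : forall x, {P x} + {~ P x}) (j : Z) :
  forall n : nat,
  (exists k, j < k <= j + 1 + Z.of_nat n /\ P k /\ forall m, j < m < k -> ~ P m) \/
  (forall m, j < m <= j + 1 + Z.of_nat n -> ~ P m).
Proof.
  induction n.
  - destruct (dec (j+1)).
    + left. exists (j+1). repeat split; try lia; auto; intros m Hm; lia.
    + right. intros m Hm. replace m with (j+1) by lia. auto.
  - destruct IHn as [H|H]; [left; destruct H as (k & ? & ? & ?); exists k; repeat split; auto; lia|].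
    destruct (dec (j + 1 + Z.of_nat (Datatypes.S n))).
    + left. exists (j + 1 + Z.of_nat (Datatypes.S n)). repeat split; try lia; auto.
      intros m Hm. apply H. lia.
    + right. intros m Hm.
      destruct (Z.eq_dec m (j + 1 + Z.of_nat (Datatypes.S n))); [subst; auto|]. apply H; lia.
Qed.

Lemma run_exists (cap : Z -> nat) : forall l occ,
  (exists T, forall x, T < x -> (occ x < cap x)%nat) -> exists occ', run cap occ l occ'.
Proof.
  induction l as [|j l IH]; intros occ [T HT].
  - exists occ. constructor.
  - destruct (least_search (fun x => (occ x < cap x)%nat) (fun x => lt_dec _ _) j
        (Z.to_nat (Z.max T j - j))) as [(k & Hk1 & Hk2 & Hk3)|H].
    + destruct (IH (fun x => if Z.eq_dec x k then Datatypes.S (occ x)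
                      else if Z.eq_dec x j then pred (occ x) else occ x)) as [occ' Hr].
      * exists (Z.max T k). intros x Hx. destruct (Z.eq_dec x k); [lia|].
        destruct (Z.eq_dec x j); [lia|]. apply HT; lia.
      * exists occ'. econstructor; eauto; [lia|]. intros m Hm. apply Hk3 in Hm. lia.
    + exfalso. apply (H (Z.max T j + 1)); [lia|]. apply HT. lia.
Qed.

Fixpoint build (g : Z -> nat) (a : Z) (n : nat) : list Z :=
  match n with
  | O => []
  | Datatypes.S n' => repeat a (g a) ++ build g (a+1) n'
  end.

Lemma count_repeat (a x : Z) k : count_occ Z.eq_dec (repeat a k) x = if Z.eq_dec a x then k else 0%nat.
Proof. induction k; simpl; destruct (Z.eq_dec a x); auto. Qed.

Lemma build_count g : forall n a x,
  count_occ Z.eq_dec (build g a n) x = if Z_le_dec a x then if Z_lt_dec x (a + Z.of_nat n) then g x else 0%nat else 0%nat.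
Proof.
  induction n; intros a x; simpl.
  - destruct (Z_le_dec a x); [destruct (Z_lt_dec x (a+0)); [lia|]|]; auto.
  - rewrite count_occ_app, count_repeat, IHn.
    rewrite ?Zpos_P_of_succ_nat.
    repeat match goal with
           | |- context[Z_lt_dec ?a ?b] => destruct (Z_lt_dec a b)
           | |- context[Z_le_dec ?a ?b] => destruct (Z_le_dec a b)
           | |- context[Z.eq_dec ?a ?b] => destruct (Z.eq_dec a b)
           end; subst; lia.
Qed.

Lemma build_in g : forall n a y, In y (build g a n) -> a <= y.
Proof.
  induction n; intros a y H; simpl in H; [contradiction|].
  apply in_app_or in H as [H|H].
  - apply repeat_spec in H. lia.
  - apply IHn in H. lia.
Qed.

Lemma sorted_rep (a : Z) : forall k l2, Sorted Z.le l2 -> (forall y, In y l2 -> a <= y) ->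
  Sorted Z.le (repeat a k ++ l2).
Proof.
  induction k; intros l2 Hs H; simpl; auto.
  constructor; [apply IHk; auto|].
  destruct k; simpl.
  - destruct l2; constructor. apply H. left; auto.
  - constructor. lia.
Qed.

Lemma build_sorted g : forall n a, Sorted Z.le (build g a n).
Proof.
  induction n; intros a; simpl; [constructor|].
  apply sorted_rep; auto. intros y Hy. apply build_in in Hy. lia.
Qed.

Theorem mainTheorem2 (S : state) :
  is_state S ->
  (exists S' : state, carrier_evolution S S') /\
  (forall S' : state, carrier_evolution S S' <-> comb_evolution S S').
Proof.
  intros [Hv [N HN]].
  set (L0 := - Z.abs N - 1).
  assert (HL : forall i, i <= L0 -> S i = V) by (intros; apply HN; lia).
  split.
  - exists (fun i => fst (carrier_step (car0 S L0 i) (S i))).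
    apply (carrier_iff S L0 HL). intros; reflexivity.
  - intros S'. rewrite (carrier_iff S L0 HL). split.
    + intros H.
      set (balls := build (fun i => site_c (S i)) (- Z.abs N) (Z.to_nat (2 * Z.abs N + 1))).
      assert (Hc : forall i, count_occ Z.eq_dec balls i = site_c (S i)).
      { intro i. unfold balls. rewrite build_count.
        destruct (Z_le_dec (- Z.abs N) i); [destruct (Z_lt_dec i (- Z.abs N + Z.of_nat (Z.to_nat (2 * Z.abs N + 1))))|];
          auto; rewrite HN by lia; reflexivity. }
      destruct (run_exists (cap1 S) balls (fun i => site_c (S i))) as [occ' Hr].
      { exists (Z.abs N). intros x Hx. rewrite HN by lia. unfold cap1. simpl. lia. }
      exists balls, occ'. split; [apply build_sorted|]. split; [exact Hc|]. split; [exact Hr|].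
      intro i. rewrite H. symmetry. apply (comb_result S L0 Hv HL balls occ'); auto.
      apply build_sorted.
    + intros (balls & occ' & Hs & Hc & Hr & HS') i. rewrite HS'.
      apply (comb_result S L0 Hv HL balls occ'); auto.
Qed.
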